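(* Let $(Z,d)$ be an infinite compact metric space and $\psi:Z\to Z$ an expansive homeomorphism. Then there exist a compact zero-dimensional Hausdorff space $\mathcal P$, a homeomorphism $\sigma:\mathcal P\to\mathcal P$ and a continuous surjection $\pi:\mathcal P\to Z$ with $\pi\circ\sigma=\psi\circ\pi$, such that $\pi$ is injective on a dense $G_\delta$-subset of $\mathcal P$ (i.e. the set of $p\in\mathcal P$ with $\pi^{-1}(\pi(p))=\{p\}$ is a dense $G_\delta$), and such that $\mathcal P$ is a Cantor space whenever $Z$ has no isolated points.
   Context: A homeomorphism $\psi$ of a compact metric space $(Z,d)$ is expansive if there is $\varepsilon_Z>0$ such that $d(\psi^n(x),\psi^n(y))\le\varepsilon_Z$ for all $n\in\mathbb Z$ implies $x=y$. *)

(* Defs.v *)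
From HB Require Import structures.
From mathcomp Require Import all_boot all_order all_algebra.
From mathcomp Require Import all_classical all_reals all_analysis borel_hierarchy cantor.
Set Implicit Arguments. Unset Strict Implicit. Unset Printing Implicit Defensive.
Import Order.TTheory GRing.Theory Num.Theory.
Local Open Scope classical_set_scope.
Local Open Scope ring_scope.

Definition is_metric_of {R : realType} (Z : topologicalType) (d : Z -> Z -> R) :=
  [/\ forall x y, 0 <= d x y,
      forall x y, d x y = 0 <-> x = y,
      forall x y, d x y = d y x,
      forall x y z, d x z <= d x y + d y z &
      forall (x : Z) (A : set Z),
        nbhs x A <-> exists2 e : R, 0 < e & [set y | d x y < e] `<=` A].

Definition homeo_pair (X Y : topologicalType) (f : X -> Y) (g : Y -> X) :=
  [/\ cancel f g, cancel g f, continuous f & continuous g].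

Definition iter_int {T : Type} (f g : T -> T) (n : int) (x : T) : T :=
  match n with
  | Posz k => iter k f x
  | Negz k => iter k.+1 g x
  end.

Definition expansive {R : realType} {Z : Type} (d : Z -> Z -> R)
  (psi psi_inv : Z -> Z) :=
  exists2 eps : R, 0 < eps &
    forall x y, (forall n : int,
       d (iter_int psi psi_inv n x) (iter_int psi psi_inv n y) <= eps) -> x = y.

Definition is_cantor_space (P : topologicalType) :=
  exists (f : P -> cantor_space) (g : cantor_space -> P), homeo_pair f g.

(* Main.v *)
Require Import Defs.
From HB Require Import structures.
From mathcomp Require Import all_boot all_order all_algebra.
From mathcomp Require Import all_classical all_reals all_analysis borel_hierarchy cantor.
From mathcomp Require Import lra.
Import Order.TTheory GRing.Theory Num.Theory.
Local Open Scope classical_set_scope.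
Local Open Scope ring_scope.
Unset Printing Implicit Defensive.
Section CantorPt.
Context {R : realType} (T : pseudoMetricType R) (t0 : T).
Definition Tpt : Type := T.
HB.instance Definition _ := PseudoMetric.on Tpt.
HB.instance Definition _ := isPointed.Build Tpt t0.

Lemma cantor_like_is_cantor : cantor_like T -> is_cantor_space T.
Proof.
move=> cT.
have cT' : cantor_like (Tpt : pseudoPMetricType R) by [].
have [f [cf clf]] := homeomorphism_cantor_like cT'.
exists (f^-1 : T -> cantor_space), (f : cantor_space -> T).
split.
- by move=> x; rewrite invK ?inE.
- by move=> x; rewrite funK ?inE.
- apply/continuous_closedP => A cA.
  have -> : ((f^-1)%FUN @^-1` A) = f @` A.
    apply/seteqP; split => x /=.
      by move=> Ax; exists ((f^-1)%FUN x) => //; rewrite invK ?inE.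
    by move=> [y Ay <-]; rewrite funK ?inE.
  exact: clf.
- exact: cf.
Qed.
End CantorPt.
Lemma homeo_preimage_closure {X Y : topologicalType} {h : X -> Y} {g : Y -> X} :
  homeo_pair h g -> forall A, h @^-1` closure A = closure (h @^-1` A).
Proof.
move=> [hK gK ch cg] A; apply/seteqP; split => x /=.
- move=> clA B nB.
  have nB' : nbhs (h x) (g @^-1` B) by apply: cg; rewrite hK.
  have [y [Ay By]] := clA _ nB'.
  by exists (g y); split => //=; rewrite gK.
- move=> clA B nB.
  have [y [Ay By]] := clA _ (ch x B nB).
  by exists (h y).
Qed.

Lemma image_closure_sub {X Y : topologicalType} {f : X -> Y} {A : set X} :
  continuous f -> f @` closure A `<=` closure (f @` A).
Proof.
move=> cf _ [x clx <-] B nB.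
have [y [Ay By]] := clx _ (cf x B nB).
by exists (f y); split => //; exists y.
Qed.
Section Gen.
Context {K : countType}.
Local Notation BK := (prod_topology (fun _ : K => bool)).

Lemma nbhs_BK_coord (b : BK) k : nbhs b [set c : BK | c k = b k].
Proof.
exact: (@proj_continuous K (fun _ => bool) k b [set b k] (discrete_set1 (b k))).
Qed.

Lemma cvg_BK {X : Type} (F : set_system X) {FF : Filter F} (f : X -> BK) (b : BK) :
  (forall k, \forall x \near F, f x k = b k) -> f @ F --> b.
Proof.
move=> H.
have := @cvg_sup BK _ (fun i => Topological.class (initial_topology (fun f : BK => f i))) (f @ F) b.
move=> /(_ _)/iffRL; apply.
move=> i A /=; rewrite (@nbhsE (initial_topology (fun f : BK => f i))).
move=> [B [oB Bb] BA].
case: oB => C oC CB.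
rewrite nbhs_filterE; apply: filterS BA _.
apply: filterS (H i) => x /= fx; rewrite -CB /= fx.
by rewrite -CB in Bb.
Qed.
End Gen.
Lemma baire_compact (Z : topologicalType) (E : nat -> set Z) :
  compact [set: Z] -> hausdorff_space Z ->
  (forall n, closed (E n)) ->
  (forall n (W : set Z), open W -> W `<=` E n -> W = set0) ->
  dense [set z | forall n, ~ E n z].
Proof.
move=> cZ hZ cE iE.
have step : forall n (V : set Z), exists V' : set Z,
    open V /\ V !=set0 -> [/\ open V', V' !=set0 & closure V' `<=` V `&` ~` E n].
  move=> n V; have [[oV V0]|] := pselect (open V /\ V !=set0); last by exists V.
  have [[x Vx]|] := pselect (V `&` ~` E n !=set0); last first.
    move=> H; exfalso; apply: H; apply/set0P/eqP => H0.
    have : V = set0 by apply: (iE n) => // v Vv; apply: contrapT => nE;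
      have : (V `&` ~` E n) v by [];  rewrite H0.
    by move=> V00; move: V0; rewrite V00 => -[].
  have oU : open (V `&` ~` E n) by apply: openI => //; exact: closed_openC.
  have [i ni ciU] := compact_regular hZ cZ (@filterT _ (nbhs x) _) (open_nbhs_nbhs (conj oU Vx)).
  exists (interior i) => _; split.
  - exact: open_interior.
  - by exists x; exact: ni.
  - apply: subset_trans ciU; apply: closureS; exact: interior_subset.
pose st n V := projT1 (cid (step n V)).
have stP n V : open V /\ V !=set0 -> [/\ open (st n V), st n V !=set0 & closure (st n V) `<=` V `&` ~` E n].
  exact: (projT2 (cid (step n V))).
move=> W W0 oW.
pose fix Wn n := if n is m.+1 then st m (Wn m) else W.
have WnP n : open (Wn n) /\ Wn n !=set0.
  by elim: n => [|n [IH1 IH2]] //=; have [] := stP n _ (conj IH1 IH2).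
have WnS n : Wn n.+1 `<=` Wn n.
  have [_ _ H] := stP n _ (WnP n).
  by move=> z Wz; have [] := H z (subset_closure Wz).
have Wdec i j : (i <= j)%N -> Wn j `<=` Wn i.
  elim: j => [|j IH]; first by rewrite leqn0 => /eqP ->.
  rewrite leq_eqVlt => /predU1P[->//|/IH].
  by apply: subset_trans; exact: WnS.
pose F := filter_from [set: nat] Wn.
have FF : ProperFilter F.
  split; first by case=> n _ P; have [_ [x /P]] := WnP n.
  apply: filter_from_filter; first by exists 0%N.
  move=> i j _ _; exists (maxn i j) => //; rewrite subsetI.
  by split; apply: Wdec; [exact: leq_maxl | exact: leq_maxr].
have [z [_ clz]] := cZ F FF (@filterT _ F _).
have clWn n : closure (Wn n) z.
  by move=> B nB; apply: clz => //; exists n.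
exists z; split.
  by have [_ _ H] := stP 0%N _ (WnP 0%N); have [] := H z (clWn 1%N).
move=> n; have [_ _ H] := stP n _ (WnP n); by have [] := H z (clWn n.+1).
Qed.
Section Core.
Context (Z : topologicalType) (K : countType) (O : K -> set Z)
  (psi psii : Z -> Z) (tau taui : K -> K).
Hypothesis cZ : compact [set: Z].
Hypothesis hZ : hausdorff_space Z.
Hypothesis oO : forall k, open (O k).
Hypothesis rO : forall k z, closure (O k) z -> ~ O k z -> closure (~` closure (O k)) z.
Hypothesis sepO : forall z z', z <> z' -> exists k, O k z /\ ~ closure (O k) z'.
Hypothesis hpsi : homeo_pair psi psii.
Hypothesis tauE : forall k, psi @^-1` (O k) = O (tau k).
Hypothesis tauiE : forall k, psii @^-1` (O k) = O (taui k).
Hypothesis tauK : cancel tau taui.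
Hypothesis tauiK : cancel taui tau.

Local Notation BK := (prod_topology (fun _ : K => bool)).

Definition chi (z : Z) : BK := fun k => `[< O k z >].
Definition Dk k := closure (O k) `&` ~` O k.
Definition G := [set z | forall k, ~ Dk k z].
Definition Aset : set BK := closure (chi @` G).
Definition Rel (b : BK) (z : Z) :=
  forall N, nbhs b N -> closure (G `&` chi @^-1` N) z.

Lemma Dk_closed k : closed (Dk k).
Proof. apply: closedI; [exact: closed_closure | exact: open_closedC]. Qed.

Lemma Dk_int k (W : set Z) : open W -> W `<=` Dk k -> W = set0.
Proof.
move=> oW WD; apply/seteqP; split => // w Ww.
have [clw _] := WD w Ww.
have [u [Ou Wu]] := clw W (open_nbhs_nbhs (conj oW Ww)).
by have [_] := WD u Wu.
Qed.

Lemma G_dense : dense G.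
Proof.
pose E n := if unpickle n is Some k then Dk k else set0.
have := @baire_compact Z E cZ hZ.
move=> /(_ _ _) H; have {H} : dense [set z | forall n, ~ E n z].
  apply: H.
  - by move=> n; rewrite /E; case: (unpickle n) => [k|]; [exact: Dk_closed|exact: closed0].
  - move=> n W oW; rewrite /E; case: (unpickle n) => [k|]; first exact: Dk_int.
    by move=> W0; apply/seteqP; split.
move=> dE W W0 oW; have [z [Wz Ez]] := dE W W0 oW.
exists z; split => // k; have := Ez (pickle k); by rewrite /E pickleK.
Qed.

Lemma Dk_psi k : psi @^-1` Dk k = Dk (tau k).
Proof.
by rewrite /Dk preimage_setI (homeo_preimage_closure hpsi) tauE -tauE.
Qed.

Lemma Dk_psii k : psii @^-1` Dk k = Dk (taui k).
Proof.
have hpsii : homeo_pair psii psi by case: hpsi.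
by rewrite /Dk preimage_setI (homeo_preimage_closure hpsii) tauiE -tauiE.
Qed.

Lemma G_psi {z} : G z -> G (psi z).
Proof. by move=> Gz k; change (~ (psi @^-1` Dk k) z); rewrite Dk_psi. Qed.

Lemma G_psii {z} : G z -> G (psii z).
Proof. by move=> Gz k; change (~ (psii @^-1` Dk k) z); rewrite Dk_psii. Qed.

Lemma chi_psi z : chi (psi z) = (fun k => chi z (tau k)).
Proof.
apply: functional_extensionality_dep => k.
by rewrite /chi; change (O k (psi z)) with ((psi @^-1` O k) z); rewrite tauE.
Qed.

Lemma chi_psii z : chi (psii z) = (fun k => chi z (taui k)).
Proof.
apply: functional_extensionality_dep => k.
by rewrite /chi; change (O k (psii z)) with ((psii @^-1` O k) z); rewrite tauiE.
Qed.

Lemma Rel_chi {w} : G w -> Rel (chi w) w.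
Proof. by move=> Gw N nN; apply: subset_closure; split => //; exact: (nbhs_singleton nN). Qed.

Lemma Rel_bit {b z k} : Rel b z -> O k z -> b k = true.
Proof.
move=> Rbz Okz.
have [w [[Gw /= <-] Ow]] := Rbz _ (nbhs_BK_coord b k) _ (open_nbhs_nbhs (conj (oO k) Okz)).
by rewrite /chi asboolT.
Qed.

Lemma Rel_bit0 {b z k} : Rel b z -> b k = true -> closure (O k) z.
Proof.
move=> Rbz bk; apply: closureS (Rbz _ (nbhs_BK_coord b k)).
by move=> w [Gw /=]; rewrite bk /chi => /asboolP.
Qed.

Lemma Rel_uniq {b z z'} : Rel b z -> Rel b z' -> z = z'.
Proof.
move=> Rz Rz'; apply: contrapT => /sepO [k [Okz ncl]].
by apply: ncl; apply: (Rel_bit0 Rz'); exact: (Rel_bit Rz).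
Qed.

Lemma Rel_G {b z} : G z -> Rel b z -> b = chi z.
Proof.
move=> Gz Rbz; apply: functional_extensionality_dep => k.
have [Okz|nOkz] := pselect (O k z).
  by rewrite (Rel_bit Rbz Okz) /chi asboolT.
rewrite /chi asboolF //; case bk: (b k) => //.
by exfalso; apply: (Gz k); split => //; exact: Rel_bit0 Rbz bk.
Qed.
Lemma BK_compact : compact [set: BK].
Proof.
have := @tychonoff _ (fun _ : K => bool) _ (fun=> bool_compact).
by congr (compact _); rewrite eqEsubset.
Qed.

Lemma Rel_ex {b} : Aset b -> exists z, Rel b z.
Proof.
move=> Ab.
pose F := filter_from (nbhs b) (fun N => G `&` chi @^-1` N).
have FF : ProperFilter F.
  split.
    case=> N nN P; have [_ [[w Gw <-] Nc]] := Ab N nN.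
    by apply: (P w).
  apply: filter_from_filter; first by exists setT; exact: filterT.
  move=> N1 N2 n1 n2; exists (N1 `&` N2); first exact: filterI.
  by move=> w [Gw [? ?]]; split; split.
have [z [_ clz]] := cZ F FF (@filterT _ F _).
exists z => N nN B nB; apply: clz => //; by exists N.
Qed.

Lemma Rel_through {z} {E : set Z} : open E -> closure E z ->
  exists b, Rel b z /\ closure (chi @` (G `&` E)) b.
Proof.
move=> oE clE.
pose F := filter_from (nbhs z) (fun U => chi @` (G `&` E `&` U)).
have FF : ProperFilter F.
  split.
    case=> U nU P.
    move: nU; rewrite nbhsE => -[U' [oU' U'z] U'U].
    have EU0 : (E `&` U') !=set0 by apply: clE; exact: open_nbhs_nbhs.
    have [w [[Ew U'w] Gw]] := G_dense _ EU0 (openI oE oU').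
    by apply: (P (chi w)); exists w => //; split => //; exact: U'U.
  apply: filter_from_filter; first by exists setT; exact: filterT.
  move=> N1 N2 n1 n2; exists (N1 `&` N2); first exact: filterI.
  by move=> _ [w [[Gw Ew] [? ?]] <-]; split; exists w.
have [b [_ clb]] := BK_compact F FF (@filterT _ F _).
exists b; split.
  move=> N nN B nB.
  have [_ [[w [[Gw Ew] Bw] <-] Nc]] := clb _ _ (ex_intro2 _ _ B nB (fun x Hx => Hx)) nN.
  by exists w.
move=> N nN.
have [_ [[w [[Gw Ew] _] <-] Nc]] := clb _ _ (ex_intro2 _ _ setT (@filterT _ (nbhs z) _) (fun x Hx => Hx)) nN.
by exists (chi w); split => //; exists w.
Qed.

Lemma Rel_A {b z} : Rel b z -> Aset b.
Proof.
move=> Rbz N nN; have [w [[Gw Nw] _]] := Rbz N nN setT (@filterT _ (nbhs z) _).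
by exists (chi w); split => //; exists w.
Qed.
Definition PP := set_type Aset.
Lemma PA (p : PP) : Aset (val p). Proof. exact: set_mem (valP p). Qed.
Definition mkP {b} (Ab : Aset b) : PP := exist _ b (mem_set Ab).
Lemma cval : continuous (val : PP -> BK). Proof. exact: initial_continuous. Qed.

Definition pi (p : PP) : Z := projT1 (cid (Rel_ex (PA p))).
Lemma piP p : Rel (val p) (pi p). Proof. exact: projT2 (cid (Rel_ex (PA p))). Qed.
Arguments piP : clear implicits.

Lemma pi_mk {b z} (Ab : Aset b) : Rel b z -> pi (mkP Ab) = z.
Proof. by move=> Rbz; apply: (Rel_uniq (piP (mkP Ab))). Qed.

Lemma pi_cont : continuous pi.
Proof.
move=> p W nW.
have [W1 nW1 cW1] := compact_regular hZ cZ (@filterT _ (nbhs (pi p)) _) nW.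
have [N nN NW1] : exists2 N, nbhs (val p) N & G `&` chi @^-1` N `<=` W1.
  apply: contrapT => H.
  pose F := filter_from (nbhs (val p)) (fun N => G `&` chi @^-1` N `&` ~` W1).
  have FF : ProperFilter F.
    split.
      case=> N nN P0; apply: H; exists N => // w Hw.
      by apply: contrapT => nw; apply: (P0 w).
    apply: filter_from_filter; first by exists setT; exact: filterT.
    move=> N1 N2 n1 n2; exists (N1 `&` N2); first exact: filterI.
    by move=> w [[Gw [? ?]] nw]; split; split.
  have [z' [_ clz']] := cZ F FF (@filterT _ F _).
  have Rz' : Rel (val p) z'.
    move=> N nN B nB; have [w [[[Gw Nw] _] Bw]] := clz' _ _ (ex_intro2 _ _ N nN (fun x Hx => Hx)) nB.
    by exists w.
  have zz := Rel_uniq (piP p) Rz'; rewrite -zz in clz'.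
  have [w [[_ nw] W1w]] := clz' _ _ (ex_intro2 _ _ setT (@filterT _ (nbhs (val p)) _) (fun x Hx => Hx)) nW1.
  by apply: nw.
have nNi := nbhs_interior nN.
apply: (@filterS _ (nbhs p) _ (val @^-1` (interior N))); last exact: (cval p _ nNi).
move=> q /= Nq.
apply: cW1; apply: (@closureS _ _ _ NW1 (pi q)); apply: (piP q); exact: Nq.
Qed.

Definition sigB (b : BK) : BK := fun k => b (tau k).
Definition sigBi (b : BK) : BK := fun k => b (taui k).

Lemma sigB_cont : continuous sigB.
Proof. move=> x; apply: cvg_BK => k; exact: nbhs_BK_coord x (tau k). Qed.
Lemma sigBi_cont : continuous sigBi.
Proof. move=> x; apply: cvg_BK => k; exact: nbhs_BK_coord x (taui k). Qed.

Lemma sigB_A {b} : Aset b -> Aset (sigB b).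
Proof.
move=> Ab.
have H : closure (sigB @` (chi @` G)) (sigB b) by apply: (image_closure_sub sigB_cont); exists b.
have sub : sigB @` (chi @` G) `<=` chi @` G.
  move=> _ [_ [w Gw <-] <-]; exists (psi w); first exact: G_psi.
  by rewrite chi_psi.
exact: (closureS sub H).
Qed.
Lemma sigBi_A {b} : Aset b -> Aset (sigBi b).
Proof.
move=> Ab.
have H : closure (sigBi @` (chi @` G)) (sigBi b) by apply: (image_closure_sub sigBi_cont); exists b.
have sub : sigBi @` (chi @` G) `<=` chi @` G.
  move=> _ [_ [w Gw <-] <-]; exists (psii w); first exact: G_psii.
  by rewrite chi_psii.
exact: (closureS sub H).
Qed.

Definition sigma (p : PP) : PP := mkP (sigB_A (PA p)).
Definition sigmai (p : PP) : PP := mkP (sigBi_A (PA p)).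

Lemma sigma_cont : continuous sigma.
Proof.
apply: continuous_comp_initial => x.
exact: (continuous_comp (@cval x) (@sigB_cont (val x))).
Qed.
Lemma sigmai_cont : continuous sigmai.
Proof.
apply: continuous_comp_initial => x.
exact: (continuous_comp (@cval x) (@sigBi_cont (val x))).
Qed.

Lemma sigma_homeo : homeo_pair sigma sigmai.
Proof.
split; [move=> p|move=> p| exact: sigma_cont | exact: sigmai_cont];
  apply: val_inj; apply: functional_extensionality_dep => k /=;
  by rewrite /sigBi /sigB ?tauiK ?tauK.
Qed.

Lemma pi_sigma : pi \o sigma = psi \o pi.
Proof.
apply: funext => p /=; apply: pi_mk => N nN.
have nN' : nbhs (val p) (sigB @^-1` N) by exact: sigB_cont.
have [psic _ cpsi _] := hpsi.
have H : closure (psi @` (G `&` chi @^-1` (sigB @^-1` N))) (psi (pi p)).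
  by apply: (image_closure_sub cpsi); exists (pi p) => //; exact: (piP p _ nN').
have sub : psi @` (G `&` chi @^-1` (sigB @^-1` N)) `<=` G `&` chi @^-1` N.
  move=> _ [w [Gw Nw] <-]; split; first exact: G_psi.
  by rewrite /= chi_psi.
exact: (closureS sub H).
Qed.

Lemma pi_surj z : exists p, pi p = z.
Proof.
have [b [Rbz _]] := Rel_through openT (subset_closure (I : setT z)).
by exists (mkP (Rel_A Rbz)); exact: pi_mk.
Qed.
Lemma BK_hausdorff : hausdorff_space BK.
Proof. by apply: hausdorff_product => _; apply: discrete_hausdorff. Qed.

Lemma PP_hausdorff : hausdorff_space PP.
Proof.
move=> p q clpq; apply: val_inj; apply: BK_hausdorff => A B nA nB.
have [r [Ar Br]] := clpq _ _ (cval p _ nA) (cval q _ nB).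
by exists (val r).
Qed.

Lemma PP_zero : zero_dimensional PP.
Proof.
move=> p q /eqP npq.
have vpq : val p != val q by apply/eqP => /val_inj.
have [U [clU Up nUq]] := zero_dimension_prod (fun _ => @discrete_zero_dimension bool) vpq.
exists (val @^-1` U); split => //; apply: preimage_clopen => //; exact: cval.
Qed.

Lemma PP_compact : compact [set: PP].
Proof.
move=> F FF FT.
have cA : compact Aset.
  exact: (@subclosed_compact BK Aset setT (@closed_closure BK _) BK_compact (fun _ _ => I)).
have FF' : ProperFilter (val @ F) by exact: fmap_proper_filter.
have [b [Ab clb]] := cA (val @ F) FF' (filterS (fun p _ => PA p) FT).
exists (mkP Ab); split => // Y B FY nB.
move: nB; rewrite nbhsE => -[B' [oB' B'p] B'B].
case: oB' B'p B'B => V oV <- Vb VB.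
have FvY : (val @ F) (val @` Y).
  apply: (@filterS _ F _ Y); last exact: FY.
  by move=> y Yy; exists y.
have [_ [[y Yy <-] Vy]] := clb _ _ FvY (open_nbhs_nbhs (conj oV Vb)).
by exists y; split => //; apply: VB.
Qed.

Definition SS := [set p : PP | pi @^-1` [set pi p] = [set p]].

Lemma SS_G : SS = pi @^-1` G.
Proof.
apply/seteqP; split => p /=.
- move=> Sp k [clk nk].
  have rk := rO k (pi p) clk nk.
  have oC : open (~` closure (O k)) by rewrite openC; exact: closed_closure.
  have [b1 [R1 cl1]] := Rel_through (oO k) clk.
  have [b0 [R0 cl0]] := Rel_through oC rk.
  have b1k : b1 k = true.
    have [_ [[w [Gw Ow] <-] <-]] := cl1 _ (nbhs_BK_coord b1 k).
    by rewrite /chi asboolT.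
  have b0k : b0 k = false.
    have [_ [[w [Gw Ow] <-] <-]] := cl0 _ (nbhs_BK_coord b0 k).
    rewrite /chi asboolF // => Okw; apply: Ow; exact: subset_closure.
  have e1 : (pi @^-1` [set pi p]) (mkP (Rel_A R1)) by rewrite /= (pi_mk _ R1).
  have e0 : (pi @^-1` [set pi p]) (mkP (Rel_A R0)) by rewrite /= (pi_mk _ R0).
  rewrite Sp in e1 e0.
  have : b1 = b0 by have := f_equal val (etrans e1 (esym e0)).
  by move/(f_equal (fun b => b k)); rewrite b1k b0k.
- move=> Gp; apply/seteqP; split => q /=; last by move=> ->.
  move=> pq; apply: val_inj.
  rewrite (Rel_G Gp (piP p)) -pq; apply: Rel_G; first by rewrite pq.
  exact: piP.
Qed.

Lemma SS_Gdelta : Gdelta SS.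
Proof.
exists (fun n => pi @^-1` (if unpickle n is Some k then ~` Dk k else setT)).
  move=> n; apply: open_comp; first by move=> x _; exact: pi_cont.
  case: (unpickle n) => [k|]; last exact: openT.
  exact: closed_openC (Dk_closed k).
rewrite SS_G; apply/seteqP; split => p /=.
  by move=> Gp n _; case: (unpickle n) => [k|] //=; exact: Gp.
by move=> H k; have := H (pickle k) I; rewrite pickleK.
Qed.

Lemma SS_dense : dense SS.
Proof.
move=> W [p Wp] oW.
case: oW Wp => V oV <- Vp.
have [_ [[w Gw <-] Vw]] := PA p V (open_nbhs_nbhs (conj oV Vp)).
have Ac := Rel_A (Rel_chi Gw).
exists (mkP Ac); split => //.
by rewrite SS_G /= (pi_mk _ (Rel_chi Gw)).
Qed.

Lemma chi_cont_G w : G w -> chi @ w --> chi w.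
Proof.
move=> Gw; apply: cvg_BK => k.
have [Okw|nOkw] := pselect (O k w).
  apply: filterS (open_nbhs_nbhs (conj (oO k) Okw)) => y Oky.
  by rewrite /chi !asboolT.
have ncl : ~ closure (O k) w by move=> cl; apply: (Gw k).
move: ncl; rewrite /closure /= => /existsNP [B /not_implyP [nB HB]].
apply: filterS nB => y By; rewrite /chi !asboolF // => Oy.
by apply: HB; exists y.
Qed.

Lemma PP_perfect : (forall z : Z, ~ open [set z]) -> perfect_set [set: PP].
Proof.
move=> nisoZ; apply/perfectTP => p op.
case: op => V oV Vp.
have Vp' : V (val p) by have : (val @^-1` V) p by rewrite Vp.
have [_ [[w Gw <-] Vw]] := PA p V (open_nbhs_nbhs (conj oV Vp')).
have Ac := Rel_A (Rel_chi Gw).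
have onlyw y : G y -> V (chi y) -> y = w.
  move=> Gy Vy.
  have Ay := Rel_A (Rel_chi Gy).
  have : (val @^-1` V) (mkP Ay) by [].
  rewrite Vp => /= /(f_equal val) /= cyp.
  have : (val @^-1` V) (mkP Ac) by [].
  rewrite Vp => /= /(f_equal val) /= cwp.
  have Rw : Rel (chi w) y by rewrite cwp -cyp; exact: Rel_chi.
  exact: Rel_uniq Rw (Rel_chi Gw).
have nV : nbhs w (chi @^-1` V) by apply: chi_cont_G => //; exact: open_nbhs_nbhs.
pose U := interior (chi @^-1` V) `&` ~` [set w].
have oU : open U.
  apply: openI; first exact: open_interior.
  by apply: closed_openC; apply: accessible_closed_set1; exact: hausdorff_accessible.
have [U0|[y [Uy Gy]]] : U = set0 \/ (U `&` G) !=set0.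
  have [U0|] := pselect (U = set0); first by left.
  move=> /eqP/set0P U0; right; exact: G_dense U0 oU.
  apply: (nisoZ w); suff -> : [set w] = interior (chi @^-1` V) by exact: open_interior.
  apply/seteqP; split => y.
    by move=> ->; exact: nV.
  move=> iy; apply: contrapT => yw.
  have : U y by split.
  by rewrite U0.
have [iy yw] := Uy; apply: yw; apply: onlyw => //.
exact: (nbhs_singleton iy).
Qed.
Lemma core_main (R : realType) (z0 : Z) :
  exists (P : topologicalType) (sigma sigma_inv : P -> P) (pi : P -> Z),
    [/\ [/\ compact [set: P], hausdorff_space P & zero_dimensional P],
        homeo_pair sigma sigma_inv,
        [/\ continuous pi, (forall z : Z, exists p : P, pi p = z)
           & pi \o sigma = psi \o pi],
        (let S := [set p : P | pi @^-1` [set pi p] = [set p]] in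
           dense S /\ Gdelta S) &
        ((forall z : Z, ~ open [set z]) -> is_cantor_space P)].
Proof.
exists PP, sigma, sigmai, pi; split.
- split; [exact: PP_compact | exact: PP_hausdorff | exact: PP_zero].
- exact: sigma_homeo.
- split; [exact: pi_cont | exact: pi_surj | exact: pi_sigma].
- by split; [exact: SS_dense | exact: SS_Gdelta].
- move=> niso.
  have cl : cantor_like PP.
    by split; [exact: PP_perfect | exact: PP_compact | exact: PP_hausdorff | exact: PP_zero].
  have [p0 _] := pi_surj z0.
  exact: (@cantor_like_is_cantor R (PP : pseudoMetricType R) p0 cl).
Qed.
End Core.
Section Iter.
Context {Z : topologicalType} (psi psii : Z -> Z).
Hypothesis hpsi : homeo_pair psi psii.

Lemma homeo_iter (f g : Z -> Z) k : homeo_pair f g -> homeo_pair (iter k f) (iter k g).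
Proof.
move=> [fK gK cf cg]; split.
- elim: k => // k IH x; by rewrite iterSr iterS fK IH.
- elim: k => // k IH x; by rewrite iterSr iterS gK IH.
- elim: k => [|k IH] x /=; first exact: cvg_id.
  exact: (continuous_comp (IH x) (cf _)).
- elim: k => [|k IH] x /=; first exact: cvg_id.
  exact: (continuous_comp (IH x) (cg _)).
Qed.

Definition hh (n : int) : Z -> Z := iter_int psi psii n.
Definition hhi (n : int) : Z -> Z := iter_int psii psi n.

Lemma hh_homeo n : homeo_pair (hh n) (hhi n).
Proof.
have hpsii : homeo_pair psii psi by case: hpsi => ? ? ? ?; split.
by case: n => k; rewrite /hh /hhi /=; apply: homeo_iter.
Qed.

Lemma hhS n x : hh (n + 1) x = hh n (psi x).
Proof.
have [pK iK _ _] := hpsi.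
case: n => [k|k]; rewrite /hh.
  by rewrite -PoszD addn1 /= -iterS iterSr.
case: k => [|k].
  by rewrite /= pK.
have -> : Negz k.+1 + 1 = Negz k.
  by rewrite !NegzE (_ : k.+2 = k.+1 + 1)%N ?PoszD ?opprD ?subrK // addn1.
by rewrite /iter_int [in RHS]iterSr pK.
Qed.

Lemma hhP n x : hh (n - 1) x = hh n (psii x).
Proof.
have [pK iK _ _] := hpsi.
by rewrite -[in RHS](subrK 1 n) hhS iK.
Qed.
End Iter.
Section Metric.
Context {R : realType} {Z : topologicalType} (d : Z -> Z -> R).
Hypothesis md : is_metric_of d.

Definition ballZ (c : Z) (r : R) := [set y | d c y < r].

Lemma ballZ_open c r : open (ballZ c r).
Proof.
case: md => _ _ _ tri nb.
rewrite openE => y /= dy; apply/nb.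
exists (r - d c y); first by rewrite subr_gt0.
move=> y' /= dyy'; have := tri c y y'; rewrite /ballZ /=; lra.
Qed.

Lemma ballZ_nbhs c r : 0 < r -> nbhs c (ballZ c r).
Proof. by case: md => _ _ _ _ nb r0; apply/nb; exists r. Qed.

Lemma closure_ballZ c r : closure (ballZ c r) `<=` [set y | d c y <= r].
Proof.
case: md => _ _ sym tri nb.
move=> y cly /=; rewrite leNgt; apply/negP => H.
have nB : nbhs y [set y' | d y y' < d c y - r] by apply/nb; exists (d c y - r) => //; rewrite subr_gt0.
have [y' [/= b1 b2]] := cly _ nB.
have := tri c y' y; rewrite (sym y' y) /ballZ /= in b1 b2 *; lra.
Qed.

Lemma Z_hausdorff : hausdorff_space Z.
Proof.
case: md => ge0 eq0 sym tri nb.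
move=> p q clpq; apply: contrapT => npq.
have r0 : 0 < d p q.
  rewrite lt_neqAle ge0 andbT; apply/eqP => /esym /eq0; exact: npq.
have [y [/= b1 b2]] := clpq _ _ (ballZ_nbhs p (d p q / 2) ltac:(lra)) (ballZ_nbhs q (d p q / 2) ltac:(lra)).
have := tri p y q; rewrite (sym y q) /ballZ /= in b1 b2 *; lra.
Qed.

Lemma Z_net : compact [set: Z] -> forall r, 0 < r ->
  exists s : seq Z, forall z, exists2 c, c \in s & d c z < r.
Proof.
move=> cZ r r0; apply: contrapT => H.
have H' (s : seq Z) : exists z, forall c, c \in s -> r <= d c z.
  apply: contrapT => nz; apply: H; exists s => z; apply: contrapT => nc.
  apply: nz; exists z => c cs; rewrite leNgt; apply/negP => dc; apply: nc.
  by exists c.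
pose F := filter_from [set: seq Z] (fun s => [set z | forall c, c \in s -> r <= d c z]).
have FF : ProperFilter F.
  split.
    by case=> s _ P; have [z Hz] := H' s; exact: (P z Hz).
  apply: filter_from_filter; first by exists [::].
  move=> s1 s2 _ _; exists (s1 ++ s2) => //.
  by move=> z Hz; split => c cs; apply: Hz; rewrite mem_cat cs ?orbT.
have [x [_ clx]] := cZ F FF (@filterT _ F _).
have [z [/= Hz dz]] := clx _ _ (ex_intro2 _ _ [:: x] I (fun z Hz => Hz)) (ballZ_nbhs x r r0).
have := Hz x (mem_head _ _); rewrite /ballZ /= in dz; lra.
Qed.
End Metric.
Theorem corollary2p24 (R : realType) (Z : topologicalType) (d : Z -> Z -> R)
  (psi psi_inv : Z -> Z) :
  is_metric_of d ->
  compact [set: Z] ->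
  ~ finite_set [set: Z] ->
  homeo_pair psi psi_inv ->
  expansive d psi psi_inv ->
  exists (P : topologicalType) (sigma sigma_inv : P -> P) (pi : P -> Z),
    [/\ [/\ compact [set: P], hausdorff_space P & zero_dimensional P],
        homeo_pair sigma sigma_inv,
        [/\ continuous pi, (forall z : Z, exists p : P, pi p = z)
           & pi \o sigma = psi \o pi],
        (let S := [set p : P | pi @^-1` [set pi p] = [set p]] in
           dense S /\ Gdelta S) &
        ((forall z : Z, ~ open [set z]) -> is_cantor_space P)].
Proof.
move=> md cZ infZ hpsi _.
have [z0 _] : exists z0 : Z, True.
  apply: contrapT => H; apply: infZ.
  suff -> : [set: Z] = set0 by exact: finite_set0.
  by apply/seteqP; split => // z _; apply: H; exists z.
have hZ := Z_hausdorff d md.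
pose r (m : nat) : R := (m.+1%:R)^-1.
have r0 m : 0 < r m by rewrite /r invr_gt0.
pose s m := projT1 (cid (Z_net d md cZ _ (r0 m))).
have sP m z : exists2 c, c \in s m & d c z < r m := projT2 (cid (Z_net d md cZ _ (r0 m))) z.
pose K := (int * (nat * nat))%type.
pose V (j : nat * nat) := interior (closure (ballZ d (nth z0 (s j.1) j.2) (r j.1))).
pose O (k : K) := hh psi psi_inv k.1 @^-1` V k.2.
pose tau (k : K) : K := (k.1 + 1, k.2).
pose taui (k : K) : K := (k.1 - 1, k.2).
apply: (@core_main Z K O psi psi_inv tau taui cZ hZ _ _ _ hpsi _ _ _ _ R z0).
- move=> k; apply: open_comp; last exact: open_interior.
  by move=> x _; case: (hh_homeo psi psi_inv hpsi k.1) => _ _ c _; exact: c.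
- move=> k z clz nz.
  have hh_h := hh_homeo psi psi_inv hpsi k.1.
  rewrite /O -(homeo_preimage_closure hh_h) in clz *.
  change (closure (hh psi psi_inv k.1 @^-1` (~` closure (V k.2))) z).
  rewrite -(homeo_preimage_closure hh_h) /=.
  pose B := closure (ballZ d (nth z0 (s k.2.1) k.2.2) (r k.2.1)).
  change (closure (~` closure (interior B)) (hh psi psi_inv k.1 z)).
  change (~ interior B (hh psi psi_inv k.1 z)) in nz.
  have : closure (~` B) (hh psi psi_inv k.1 z) by rewrite closure_setC.
  apply: closureS => y nBy cVy; apply: nBy.
  have cBy : closure B y by exact: (@closureS _ _ _ (@interior_subset _ B) y cVy).
  have cB : closed B by rewrite /B; exact: closed_closure.
  have eB : closure B = B by rewrite -(proj1 (closure_id B) cB).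
  by rewrite -eB.
- move=> z z' nzz.
  have [ge0 eq0 sym tri nb] := md.
  have dzz : 0 < d z z'.
    rewrite lt_neqAle ge0 andbT; apply/eqP => /esym /eq0; exact: nzz.
  have e2 : 0 < d z z' / 2 by lra.
  have [N _ HN] := near_infty_natSinv_lt (PosNum e2).
  have rN : r N < d z z' / 2 by exact: (HN N (leqnn N)).
  have [c cs dc] := sP N z.
  exists (0, (N, index c (s N))); split.
    rewrite /O /V /= nth_index //.
    apply: (filterS (@subset_closure _ _)).
    by apply: open_nbhs_nbhs; split; [exact: ballZ_open|].
  rewrite /O /V /= nth_index // => cl.
  pose B := closure (ballZ d c (r N)).
  have cBy : closure B z' by exact: (@closureS _ _ _ (@interior_subset _ B) z' cl).
  have cB : closed B by rewrite /B; exact: closed_closure.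
  have eB : closure B = B by rewrite -(proj1 (closure_id B) cB).
  move: cBy; rewrite eB /B.
  move=> /(closure_ballZ d md) /= dc'.
  have := tri z c z'; rewrite (sym z c); lra.
- move=> k; apply: funext => x; rewrite /O /tau /preimage /=.
  by rewrite (hhS psi psi_inv hpsi).
- move=> k; apply: funext => x; rewrite /O /taui /preimage /=.
  by rewrite (hhP psi psi_inv hpsi).
- by case=> n j; rewrite /tau /taui /= addrK.
- by case=> n j; rewrite /tau /taui /= subrK.
Qed.
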